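(* Let $(X,\|\cdot\|_X)$ be a Banach space, $\mathcal{K}\subset X$ compact, and $\gamma\ge2\,\mathrm{rad}(\mathcal{K})$. Then $\lim_{n\to\infty}d_n^\gamma(\mathcal{K})_X=0$.
   Context: $\mathrm{rad}(\mathcal{K})=\inf_{g\in X}\sup_{f\in\mathcal{K}}\|f-g\|_X$. For $k\ge1$ and a norm $\|\cdot\|_{Y_k}$ on $\mathbb{R}^k$ let $B_{Y_k}=\{y\in\mathbb{R}^k:\|y\|_{Y_k}\le1\}$. For $\gamma\ge0$, the fixed Lipschitz width is $d^\gamma(\mathcal{K},Y_k)_X=\inf_{\Phi}\sup_{f\in\mathcal{K}}\inf_{y\in B_{Y_k}}\|f-\Phi(y)\|_X$, the infimum over all maps $\Phi:B_{Y_k}\to X$ with $\|\Phi(y)-\Phi(y')\|_X\le\gamma\|y-y'\|_{Y_k}$ for all $y,y'\in B_{Y_k}$. The Lipschitz width is $d_n^\gamma(\mathcal{K})_X=\inf_{1\le k\le n}\inf_{\|\cdot\|_{Y_k}}d^\gamma(\mathcal{K},Y_k)_X$, the inner infimum over all norms on $\mathbb{R}^k$. *)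

(* Defs.v *)
From HB Require Import structures.
From mathcomp Require Import all_boot all_order all_algebra.
From mathcomp Require Import all_classical all_reals all_analysis.
Set Implicit Arguments. Unset Strict Implicit. Unset Printing Implicit Defensive.
Import Order.TTheory GRing.Theory Num.Theory.
Import numFieldNormedType.Exports.
Local Open Scope classical_set_scope.
Local Open Scope ring_scope.

(* Real-valued sup/inf of MathComp-Analysis (reals.v).  All sets to which
   they are applied below are nonempty and bounded (K compact, Lipschitz maps
   continuous on compact balls), except possibly when K is empty, where the
   convention sup set0 = 0 gives the natural value 0 for distances. *)

Definition set_rad (R : realType) (X : normedModType R) (K : set X) : R :=
  inf [set sup [set `|f - g| | f in K] | g in [set: X]].

Definition is_norm (R : realType) (k : nat) (N : 'rV[R]_k -> R) : Prop :=
  [/\ forall x, N x = 0 -> x = 0,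
      forall (a : R) x, N (a *: x) = `|a| * N x &
      forall x y, N (x + y) <= N x + N y].

Definition unit_ball (R : realType) (k : nat) (N : 'rV[R]_k -> R) : set 'rV[R]_k :=
  [set y | N y <= 1].

Definition lip_on_ball (R : realType) (X : normedModType R) (k : nat)
    (N : 'rV[R]_k -> R) (gamma : R) (Phi : 'rV[R]_k -> X) : Prop :=
  forall y y', unit_ball N y -> unit_ball N y' ->
    `|Phi y - Phi y'| <= gamma * N (y - y').

Definition fixed_lip_width (R : realType) (X : normedModType R) (gamma : R)
    (K : set X) (k : nat) (N : 'rV[R]_k -> R) : R :=
  inf [set e | exists Phi : 'rV[R]_k -> X, lip_on_ball N gamma Phi /\
         e = sup [set inf [set `|f - Phi y| | y in unit_ball N] | f in K]].

Definition lip_width (R : realType) (X : normedModType R) (gamma : R)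
    (K : set X) (n : nat) : R :=
  inf [set e | exists (k : nat) (N : 'rV[R]_k -> R),
         (1 <= k <= n)%N /\ is_norm N /\ e = fixed_lip_width gamma K N].

(* Main.v *)
Require Import Defs.
From HB Require Import structures.
From mathcomp Require Import all_boot all_order all_algebra.
From mathcomp Require Import all_classical all_reals all_analysis.
From mathcomp Require Import finmap.
Import Order.TTheory GRing.Theory Num.Theory.
Import numFieldNormedType.Exports.
Local Open Scope classical_set_scope.
Local Open Scope ring_scope.
From mathcomp Require Import lra.
Section Gen.
Variable R : realType.

Lemma inf_ge0' (E : set R) : (forall x, E x -> 0 <= x) -> 0 <= inf E.
Proof.
move=> h; have [->|/set0P ne] := eqVneq E set0; first by rewrite inf0.
exact: lb_le_inf.
Qed.

Lemma sup_ge0' (E : set R) : (forall x, E x -> 0 <= x) -> 0 <= sup E.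
Proof.
move=> h; have [hs|hn] := pselect (has_sup E); last by rewrite sup_out.
case: (hs) => -[x Ex] _; apply: le_trans (h x Ex) _.
by apply: ub_le_sup => //; case: hs.
Qed.

Lemma inf_le_elem (E : set R) x : (forall x, E x -> 0 <= x) -> E x -> inf E <= x.
Proof. by move=> h Ex; apply: ge_inf => //; exists 0. Qed.

Lemma sup_le_b (E : set R) b : (forall x, E x -> x <= b) -> 0 <= b -> sup E <= b.
Proof.
move=> h b0; have [->|/set0P ne] := eqVneq E set0; first by rewrite sup0.
exact: ge_sup.
Qed.

Lemma inf_le_b (E : set R) b : (forall x, E x -> 0 <= x) ->
  (forall x, E x -> x <= b) -> 0 <= b -> inf E <= b.
Proof.
move=> h0 h b0; have [->|/set0P [x Ex]] := eqVneq E set0; first by rewrite inf0.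
apply: le_trans (h x Ex); exact: inf_le_elem.
Qed.
End Gen.
Definition l1n (R : realType) (k : nat) (y : 'rV[R]_k) : R := \sum_(i < k) `|y 0 i|.
Arguments l1n {R k}.

Lemma l1n_norm (R : realType) k : is_norm (@l1n R k).
Proof.
split.
- move=> x /eqP; rewrite /l1n psumr_eq0 //= => /allP h.
  apply/matrixP => i0 i; rewrite mxE; apply/normr0_eq0/eqP.
  by rewrite (ord1 i0); apply: (h i); rewrite mem_index_enum.
- move=> a x; rewrite /l1n mulr_sumr; apply: eq_bigr => i _.
  by rewrite mxE normrM.
- move=> x y; rewrite /l1n -big_split /=; apply: ler_sum => i _.
  by rewrite mxE ler_normD.
Qed.

Lemma l1n_lip (R : realType) (X : normedModType R) k (v : 'I_k -> X) (x0 : X) gamma :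
  (forall i, `|v i| <= gamma) ->
  lip_on_ball (@l1n R k) gamma (fun y => \sum_(i < k) y 0 i *: v i + x0).
Proof.
move=> hv y y' _ _.
have -> : \sum_(i < k) y 0 i *: v i + x0 - (\sum_(i < k) y' 0 i *: v i + x0)
   = \sum_(i < k) (y - y') 0 i *: v i.
  rewrite opprD addrACA subrr addr0 -sumrB; apply: eq_bigr => i _.
  by rewrite !mxE scalerBl.
apply: le_trans (ler_norm_sum _ _ _) _.
rewrite /l1n mulr_sumr; apply: ler_sum => i _.
by rewrite normrZ mulrC ler_wpM2r.
Qed.

Lemma l1n_eval (R : realType) (X : normedModType R) k (v : 'I_k -> X) (x0 : X) (j : 'I_k) :
  let y := \row_(i < k) ((i == j)%:R : R) in
  l1n y <= 1 /\ \sum_(i < k) y 0 i *: v i + x0 = v j + x0.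
Proof.
move=> y; split.
  rewrite /l1n (bigD1 j) //= big1 ?addr0 => [|i hij]; rewrite /y mxE.
    by rewrite eqxx normr1.
  by rewrite (negbTE hij) normr0.
congr (_ + _); rewrite (bigD1 j) //= big1 ?addr0 => [|i hij]; rewrite /y mxE.
  by rewrite eqxx scale1r.
by rewrite (negbTE hij) scale0r.
Qed.

Theorem corollary4p3 (R : realType) (X : completeNormedModType R)
  (K : set X) (gamma : R) :
  compact K -> 2 * set_rad K <= gamma ->
  lip_width gamma K @ \oo --> (0 : R).
Proof.
move=> cK hrad.
have fl_ge0 : forall k (N : 'rV[R]_k -> R), 0 <= fixed_lip_width gamma K N.
  move=> k N; apply: inf_ge0' => e [Phi [_ ->]]; apply: sup_ge0' => _ [f Kf <-].
  apply: inf_ge0' => _ [y _ <-]; exact: normr_ge0.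
have lw_ge0 : forall n, 0 <= lip_width gamma K n.
  move=> n; apply: inf_ge0' => e [k [N [_ [_ ->]]]]; exact: fl_ge0.
suff key : forall eps, 0 < eps -> exists m, forall n, (m <= n)%N -> lip_width gamma K n <= eps.
  apply/cvgrPdist_le => eps e0; have [m hm] := key eps e0.
  exists m => // n /= hn; rewrite sub0r normrN ger0_norm //; exact: hm.
move=> eps e0.
have [K0|/set0P [z Kz]] := eqVneq K set0.
  exists 0%N => n _; apply: inf_le_b; last exact: ltW.
  - move=> e [k [N [_ [_ ->]]]]; exact: fl_ge0.
  - move=> e [k [N [_ [_ ->]]]]; apply: inf_le_b; last exact: ltW.
      move=> e' [Phi [_ ->]]; apply: sup_ge0' => _ [f Kf <-].
      by apply: inf_ge0' => _ [y _ <-]; exact: normr_ge0.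
    by move=> e' [Phi [_ ->]]; rewrite K0 image_set0 sup0; exact: ltW.
have diam : forall f f', K f -> K f' -> `|f - f'| <= gamma.
  move=> f f' Kf Kf'.
  suff : `|f - f'| / 2 <= set_rad K by move=> h; lra.
  apply: lb_le_inf; first by eexists; exists 0.
  move=> _ [g _ <-].
  have [M [_ HM]] := compact_bounded cK.
  have hM : forall x, K x -> `|x| <= M + 1.
    by move=> x Kx; apply: (HM (M + 1)) => //; rewrite ltrDl.
  have ub : has_ubound [set `|h - g| | h in K].
    exists (M + 1 + `|g|) => _ [h Kh <-].
    by apply: le_trans (ler_normB _ _) _; rewrite lerD2r hM.
  have h1 := ub_le_sup ub (ex_intro2 _ _ f Kf erefl).
  have h2 := ub_le_sup ub (ex_intro2 _ _ f' Kf' erefl).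
  have h3 := ler_distD g f f'.
  rewrite [X in _ <= _ + X]distrC in h3.
  simpl in h1, h2; lra.
have cov : K `<=` cover K (fun x => ball x eps).
  by move=> x Kx; exists x => //; exact: ballxx.
have [D DK KD] : finite_subset_cover K (fun x => ball x eps) K.
  move: cK; rewrite compact_cover => /(_ X K _ _ cov); apply => i _.
  exact: ball_open.
pose s := enum_fset D. pose m := size s. pose x0 := nth 0 s 0.
pose v := fun i : 'I_m => nth 0 s i - x0.
have Ks : forall i, (i < m)%N -> K (nth 0 s i).
  by move=> i him; have := DK _ (mem_nth 0 him); rewrite in_setE.
have m0 : (0 < m)%N.
  have [x Dx _] := KD z Kz.
  rewrite /m lt0n size_eq0; apply/eqP => s0; move: Dx => /=.
  by move=> Dx'; have : x \in s by []; rewrite s0.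
exists m => n hn.
apply: (@le_trans _ _ (fixed_lip_width gamma K (@l1n R m))).
  apply: inf_le_elem.
    by move=> e [k [N [_ [_ ->]]]]; exact: fl_ge0.
  exists m, (@l1n R m); split; first by rewrite m0 hn.
  by split => //; exact: l1n_norm.
pose Phi := fun y : 'rV[R]_m => \sum_(i < m) y 0 i *: v i + x0.
apply: (@le_trans _ _ (sup [set inf [set `|f - Phi y| | y in unit_ball (@l1n R m)] | f in K])).
  apply: inf_le_elem.
    move=> e' [Phi' [_ ->]]; apply: sup_ge0' => _ [f Kf <-].
    by apply: inf_ge0' => _ [y _ <-]; exact: normr_ge0.
  exists Phi; split => //; apply: l1n_lip => i.
  by apply: diam; apply: Ks.
apply: sup_le_b; last exact: ltW.
move=> _ [f Kf <-].
have [x Dx bx] := KD f Kf.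
have xs : x \in s by [].
pose j : 'I_m := Ordinal (etrans (index_mem x s) xs).
have [yb ye] := @l1n_eval R X m v x0 j.
apply: (@le_trans _ _ `|f - Phi (\row_(i < m) ((i == j)%:R : R))|).
  apply: inf_le_elem; last by exists (\row_(i < m) ((i == j)%:R : R)).
  by move=> _ [y _ <-]; exact: normr_ge0.
rewrite /Phi ye /v subrK /= nth_index //.
by rewrite distrC; apply: ltW; rewrite -ball_normE in bx.
Qed.
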